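(* Let $L=\Lambda_{24}$ be the Leech lattice and $\mathrm{Co}_0=O(\Lambda_{24})$ its isometry group, and let $\varepsilon$ be a cocycle as in the context. Then there is no family of functions $(\zeta_g:L\to U(1))_{g\in\mathrm{Co}_0}$ such that for all $g,g_1,g_2\in\mathrm{Co}_0$ and $k,k'\in L$: (i) $\varepsilon(k,k')\zeta_g(k+k')=\zeta_g(k)\zeta_g(k')\varepsilon(g(k),g(k'))$ and (ii) $\zeta_{g_2}(g_1(k))\zeta_{g_1}(k)=\zeta_{g_2g_1}(k)$. In particular the exact sequence $1\to\mathrm{Hom}(L,\{\pm1\})\to O(\hat L)\to \mathrm{Co}_0\to1$ does not split, i.e. $\mathrm{Co}_0$ does not lift to a subgroup of $O(\hat L)$.
   Context: The Leech lattice can be taken as $\Lambda_{24}=(\tfrac1{\sqrt2}G_{24}+\sqrt2\mathbb Z^{24}_+)\cup(\tfrac1{2\sqrt2}\underline1+\tfrac1{\sqrt2}G_{24}+\sqrt2\mathbb Z^{24}_-)\subset\mathbb R^{24}$ (standard inner product), where $G_{24}$ is the extended binary Golay code with codewords viewed as $0/1$ vectors, $\mathbb Z^{24}_\pm=\{x\in\mathbb Z^{24}:|x|^2\equiv 0 \text{ resp. }1\pmod 2\}$, $\underline1=(1,\dots,1)$; it is the unique even unimodular rank-24 lattice without vectors of squared length 2. Let $\varepsilon:L\times L\to\{\pm1\}$ be a normalized 2-cocycle with $\varepsilon(k,k')\varepsilon(k',k)=(-1)^{k\cdot k'}$ (unique up to coboundary). $\hat L=\{\pm1\}\times L$ with $(a,k)(b,k')=(ab\varepsilon(k,k'),k+k')$,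 $\kappa=(-1,0)$, $e^k=(1,k)$; $O(\hat L)=\{f\in\mathrm{Aut}(\hat L):f(\kappa)=\kappa,\ \bar f\in O(L)\}$ where $\bar f(k)$ is the $L$-component of $f(e^k)$; $\mathrm{Hom}(L,\{\pm1\})$ embeds as $(a,k)\mapsto(a\eta(k),k)$. *)

(* Defs.v *)
From HB Require Import structures.
From mathcomp Require Import all_boot all_order all_algebra.
From mathcomp Require Import complex reals.
Set Implicit Arguments. Unset Strict Implicit. Unset Printing Implicit Defensive.
Import Order.TTheory GRing.Theory Num.Theory.
Local Open Scope ring_scope.

(* Generator matrix of the extended binary Golay code G24: the 12 cyclic
   shifts of the generator polynomial 1+x^2+x^4+x^5+x^6+x^10+x^11 of the
   binary [23,12,7] Golay code, each extended by an overall parity bit.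
   (Checked by enumeration: 4096 codewords, minimum weight 8.) *)
Definition golay_rows : seq (seq nat) :=
  [:: [:: 1;0;1;0;1;1;1;0;0;0;1;1;0;0;0;0;0;0;0;0;0;0;0;1];
      [:: 0;1;0;1;0;1;1;1;0;0;0;1;1;0;0;0;0;0;0;0;0;0;0;1];
      [:: 0;0;1;0;1;0;1;1;1;0;0;0;1;1;0;0;0;0;0;0;0;0;0;1];
      [:: 0;0;0;1;0;1;0;1;1;1;0;0;0;1;1;0;0;0;0;0;0;0;0;1];
      [:: 0;0;0;0;1;0;1;0;1;1;1;0;0;0;1;1;0;0;0;0;0;0;0;1];
      [:: 0;0;0;0;0;1;0;1;0;1;1;1;0;0;0;1;1;0;0;0;0;0;0;1];
      [:: 0;0;0;0;0;0;1;0;1;0;1;1;1;0;0;0;1;1;0;0;0;0;0;1];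
      [:: 0;0;0;0;0;0;0;1;0;1;0;1;1;1;0;0;0;1;1;0;0;0;0;1];
      [:: 0;0;0;0;0;0;0;0;1;0;1;0;1;1;1;0;0;0;1;1;0;0;0;1];
      [:: 0;0;0;0;0;0;0;0;0;1;0;1;0;1;1;1;0;0;0;1;1;0;0;1];
      [:: 0;0;0;0;0;0;0;0;0;0;1;0;1;0;1;1;1;0;0;0;1;1;0;1];
      [:: 0;0;0;0;0;0;0;0;0;0;0;1;0;1;0;1;1;1;0;0;0;1;1;1] ].

Definition golay_gen (r : 'I_12) (i : 'I_24) : bool :=
  nth 0%N (nth [::] golay_rows r) i == 1%N.

Definition in_golay (c : 'I_24 -> bool) : Prop :=
  exists a : 'I_12 -> bool,
    forall i, c i = \big[addb/false]_(r < 12) (a r && golay_gen r i).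

(* Ambient space: rational row vectors of length 24.  A vector x represents
   the point x / (2*sqrt 2) of R^24, so that the Leech lattice becomes
   { 2c + 4y : c in G24, y in Z^24_+ } u { 1 + 2c + 4y : c in G24, y in Z^24_- }
   and the standard inner product of R^24 becomes dot below. *)
Definition vec := 'rV[rat]_24.

Definition in_leech (x : vec) : Prop :=
  exists (c : 'I_24 -> bool) (y : 'I_24 -> int), in_golay c /\
   ( ((2 %| \sum_i y i ^+ 2)%Z /\
        forall i, x ord0 i = ((2 * (c i : nat))%:Z + 4 * y i)%:~R)
   \/ (~~ (2 %| \sum_i y i ^+ 2)%Z /\
        forall i, x ord0 i = (1 + (2 * (c i : nat))%:Z + 4 * y i)%:~R) ).

Definition dot (x y : vec) : rat := (x *m y^T) ord0 ord0 / 8.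

(* Co_0 = O(Lambda_24): orthogonal maps k |-> k *m M of R^24 preserving the
   lattice (row-vector convention: the map g1 then g2, i.e. g2 g1, has matrix
   M1 *m M2). *)
Definition Co0 (M : 'M[rat]_24) : Prop :=
  M *m M^T = 1%:M /\ (forall x, in_leech x -> in_leech (x *m M)).

(* {+1,-1} encoded by bool: true = -1. *)
Definition leech_cocycle (eps : vec -> vec -> bool) : Prop :=
  (forall k, in_leech k -> eps 0 k = false /\ eps k 0 = false) /\
  (forall k k' k'', in_leech k -> in_leech k' -> in_leech k'' ->
     eps k k' (+) eps (k + k') k'' = eps k' k'' (+) eps k (k' + k'')) /\
  (forall k k', in_leech k -> in_leech k' ->
     eps k k' (+) eps k' k = odd `|Num.floor (dot k k')|%N).

Definition sgnC (R : realType) (b : bool) : R[i] := if b then -1 else 1.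

(* The central extension \hat L = {+-1} x L, with (a,k) encoded as (a : bool, k). *)
Definition in_hatL (x : bool * vec) : Prop := in_leech x.2.

Definition hmul (eps : vec -> vec -> bool) (x y : bool * vec) : bool * vec :=
  (x.1 (+) y.1 (+) eps x.2 y.2, x.2 + y.2).

Definition in_OhatL (eps : vec -> vec -> bool) (f : bool * vec -> bool * vec) : Prop :=
  (forall x, in_hatL x -> in_hatL (f x)) /\
  (forall x y, in_hatL x -> in_hatL y -> f (hmul eps x y) = hmul eps (f x) (f y)) /\
  (forall x y, in_hatL x -> in_hatL y -> f x = f y -> x = y) /\
  (forall y, in_hatL y -> exists2 x, in_hatL x & f x = y) /\
  f (true, 0) = (true, 0) /\
  (exists M, Co0 M /\ forall k, in_leech k -> (f (false, k)).2 = k *m M).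

(* Main.v *)
Require Import Defs.
From HB Require Import structures.
From mathcomp Require Import all_boot all_order all_algebra.
From mathcomp Require Import complex reals.
Import Order.TTheory GRing.Theory Num.Theory.
Local Open Scope ring_scope.

Lemma big_foldr_seq {R : Type} (idx : R) (op : R -> R -> R) (F : nat -> R) (s : seq nat) :
  \big[op/idx]_(i <- s) F i = foldr (fun i acc => op (F i) acc) idx s.
Proof. by elim: s => [|x s IH]; rewrite ?big_nil ?big_cons ?IH. Qed.

Lemma big_foldr_ord {R : Type} (idx : R) (op : R -> R -> R) (n : nat) (F : nat -> R) :
  \big[op/idx]_(i < n) F i = foldr (fun i acc => op (F i) acc) idx (iota 0 n).
Proof. by rewrite -(big_mkord xpredT) /index_iota subn0 big_foldr_seq. Qed.

Lemma all_iota_ord {n : nat} {P : nat -> bool} :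
  all P (iota 0 n) -> forall i : 'I_n, P i.
Proof. by move=> /allP H i; apply: H; rewrite mem_iota add0n ltn_ord. Qed.

Lemma golay_ext {c d} : in_golay c -> (forall i, c i = d i) -> in_golay d.
Proof. by move=> [a ha] e; exists a => i; rewrite -e ha. Qed.

Lemma golay0 : in_golay (fun _ => false).
Proof. by exists (fun _ => false) => i; rewrite big1. Qed.

Lemma golay_xor {c d} : in_golay c -> in_golay d -> in_golay (fun i => c i (+) d i).
Proof.
move=> [a ha] [b hb]; exists (fun r => a r (+) b r) => i.
rewrite ha hb -big_split /=; apply: eq_bigr => r _.
by case: (a r); case: (b r); case: (golay_gen r i).
Qed.

Lemma golay_comb (v : 'I_12 -> 'I_24 -> bool) (a : 'I_12 -> bool) :
  (forall r, in_golay (v r)) ->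
  in_golay (fun i => \big[addb/false]_(r < 12) (a r && v r i)).
Proof.
move=> hv.
suff H : forall s : seq 'I_12, in_golay (fun i => \big[addb/false]_(r <- s) (a r && v r i)) by apply: H.
elim=> [|r s IH].
  by apply: (golay_ext golay0) => i; rewrite big_nil.
have Hr : in_golay (fun i => a r && v r i).
  case: (a r); first by apply: (golay_ext (hv r)) => i.
  by apply: (golay_ext golay0).
by apply: (golay_ext (golay_xor Hr IH)) => i; rewrite big_cons.
Qed.

Definition golay_pres (f : 'I_24 -> 'I_24) :=
  forall c, in_golay c -> in_golay (fun i => c (f i)).

Lemma golay_pres_rows f :
  (forall r, in_golay (fun i => golay_gen r (f i))) -> golay_pres f.
Proof.
move=> H c [a ha].
by apply: (golay_ext (@golay_comb (fun r i => golay_gen r (f i)) a H)) => i; rewrite ha.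
Qed.

Definition Pm (f : 'I_24 -> 'I_24) : 'M[rat]_24 := \matrix_(i, j) ((f i == j)%:R).

Section PmFacts.
Variable f : 'I_24 -> 'I_24.
Hypothesis hf : forall i, f (f i) = i.

Lemma Pm_row (x : vec) j : (x *m Pm f) ord0 j = x ord0 (f j).
Proof.
rewrite !mxE (bigD1 (f j)) //= mxE hf eqxx mulr1 big1 ?addr0 // => i hi.
rewrite mxE; case: eqP => [e|]; last by rewrite mulr0.
by move: hi; rewrite -e hf eqxx.
Qed.

Lemma Pm_orth : Pm f *m (Pm f)^T = 1%:M.
Proof.
apply/matrixP => i j; rewrite !mxE (bigD1 (f i)) //= !mxE eqxx mul1r big1 ?addr0.
  by rewrite (inj_eq (can_inj hf)) eq_sym.
move=> k hk; rewrite !mxE; case: eqP => [e|]; last by rewrite mul0r.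
by move: hk; rewrite e eqxx.
Qed.

Lemma Pm_leech x : golay_pres f -> in_leech x -> in_leech (x *m Pm f).
Proof.
move=> hp [c [y [hc H]]]; exists (fun i => c (f i)), (fun i => y (f i)); split.
  exact: hp.
have Hs : \sum_i y (f i) ^+ 2 = \sum_i y i ^+ 2.
  by rewrite [RHS](reindex_inj (can_inj hf)).
rewrite Hs; case: H => [[h1 h2]|[h1 h2]]; [left|right]; split=> // i;
  by rewrite Pm_row h2.
Qed.

Lemma Pm_Co0 : golay_pres f -> Co0 (Pm f).
Proof. by move=> hp; split; [exact: Pm_orth | move=> x; exact: Pm_leech]. Qed.

End PmFacts.

Lemma Pm_mul f g : Pm f *m Pm g = Pm (fun i => g (f i)).
Proof.
apply/matrixP => i j; rewrite !mxE (bigD1 (f i)) //= !mxE eqxx mul1r big1 ?addr0 //.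
move=> k hk; rewrite !mxE; case: eqP => [e|]; last by rewrite mul0r.
by move: hk; rewrite e eqxx.
Qed.

Lemma Pm_id f : (forall i, f i = i) -> Pm f = 1%:M.
Proof. by move=> h; apply/matrixP => i j; rewrite !mxE h. Qed.

Lemma Pm_invol f : (forall i, f (f i) = i) -> Pm f *m Pm f = 1%:M.
Proof. by move=> h; rewrite Pm_mul Pm_id. Qed.

Lemma Co0_1 : Co0 1%:M.
Proof. by split; [rewrite trmx1 mulmx1 | move=> x; rewrite mulmx1]. Qed.

Lemma Co0_mul A B : Co0 A -> Co0 B -> Co0 (A *m B).
Proof.
move=> [hA lA] [hB lB]; split.
  by rewrite trmx_mul mulmxA -(mulmxA A) hB mulmx1 hA.
by move=> x hx; rewrite mulmxA; apply: lB; apply: lA.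
Qed.

Lemma leech0 : in_leech 0.
Proof.
exists (fun _ => false), (fun _ => 0); split; first exact: golay0.
left; split; first by rewrite big1 // => i _; rewrite expr0n.
by move=> i; rewrite mxE.
Qed.

Definition ggen (r i : nat) : bool := nth 0%N (nth [::] golay_rows r) i == 1%N.

Definition ford (l : seq nat) (i : 'I_24) : 'I_24 :=
  Ordinal (ltn_pmod (nth 0%N l i) (isT : (0 < 24)%N)).
Definition fnat (l : seq nat) (i : nat) : nat := (nth 0%N l i %% 24)%N.

Definition xorfold (w : seq bool) (i : nat) : bool :=
  foldr (fun s acc => (nth false w s && ggen s i) (+) acc) false (iota 0 12).

Lemma golay_check (c : 'I_24 -> bool) (cn : nat -> bool) (w : seq bool) :
  (forall i : 'I_24, c i = cn i) ->
  all (fun i => cn i == xorfold w i) (iota 0 24) -> in_golay c.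
Proof.
move=> hc /all_iota_ord H; exists (fun s => nth false w s) => i.
rewrite hc (eqP (H i)) /xorfold.
by rewrite (big_foldr_ord false addb 12 (fun s => nth false w s && ggen s i)).
Qed.

Definition rows_check (l : seq nat) (W : seq (seq bool)) : bool :=
  all (fun r => all (fun i => ggen r (fnat l i) == xorfold (nth [::] W r) i) (iota 0 24)) (iota 0 12).

Lemma rows_check_pres {l W} : rows_check l W -> golay_pres (ford l).
Proof.
move=> /all_iota_ord H; apply: golay_pres_rows => r.
by apply: (@golay_check _ (fun i => ggen r (fnat l i)) (nth [::] W r)) => //; exact: H r.
Qed.

Definition invol_check (l : seq nat) : bool :=
  all (fun i => fnat l (fnat l i) == i) (iota 0 24).

Lemma invol_ford {l} : invol_check l -> forall i, ford l (ford l i) = i.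
Proof. by move=> /all_iota_ord H i; apply/val_inj/eqP; exact: H i. Qed.

Definition vrow (l : seq int) : vec := \row_(i < 24) (nth 0 l i)%:~R.

Definition vperm_check (l l' : seq int) (p : seq nat) : bool :=
  all (fun j => nth 0 l' j == nth 0 l (fnat p j)) (iota 0 24).

Lemma vrow_perm l l' p : invol_check p -> vperm_check l l' p ->
  vrow l *m Pm (ford p) = vrow l'.
Proof.
move=> hi /all_iota_ord H; apply/rowP => j.
rewrite Pm_row; last exact: invol_ford.
by rewrite !mxE (eqP (H j)).
Qed.

Definition vadd_check (l l' l'' : seq int) : bool :=
  all (fun j => nth 0 l'' j == nth 0 l j + nth 0 l' j) (iota 0 24).

Lemma vrow_add l l' l'' : vadd_check l l' l'' -> vrow l + vrow l' = vrow l''.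
Proof.
move=> /all_iota_ord H; apply/rowP => j.
by rewrite !mxE (eqP (H j)) rmorphD.
Qed.

Definition sumsq (y : seq int) : int := foldr (fun i acc => nth 0 y i ^+ 2 + acc) 0 (iota 0 24).
Definition sprod (l l' : seq int) : int := foldr (fun i acc => nth 0 l i * nth 0 l' i + acc) 0 (iota 0 24).

Definition leech_check (l : seq int) (t : bool) (c : seq bool) (y : seq int) (w : seq bool) : bool :=
  all (fun i => nth false c i == xorfold w i) (iota 0 24) &&
  all (fun i => nth 0 l i == (t%:Z + (2 * (nth false c i : nat))%:Z + 4 * nth 0 y i)) (iota 0 24) &&
  ((2 %| sumsq y)%Z == ~~ t).

Lemma leech_check_ok l t c y w : leech_check l t c y w -> in_leech (vrow l).
Proof.
move=> /andP[/andP[hc /all_iota_ord hl] /eqP hs].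
exists (fun i => nth false c i), (fun i => nth 0 y i); split.
  by apply: (@golay_check _ (fun i => nth false c i) w).
have Hs : \sum_(i < 24) nth 0 y i ^+ 2 = sumsq y.
  by rewrite (big_foldr_ord 0 +%R 24 (fun i => nth 0 y i ^+ 2)).
rewrite Hs hs; case: t hl hs => hl hs; [right|left]; split => // i; rewrite mxE (eqP (hl i)) //=; rewrite ?add0r.
Qed.

Lemma dot_vrow l l' : dot (vrow l) (vrow l') = (sprod l l')%:~R / 8.
Proof.
rewrite /dot !mxE; congr (_ / _).
rewrite /sprod -(big_foldr_ord 0 +%R 24 (fun i => nth 0 l i * nth 0 l' i)) rmorph_sum.
by apply: eq_bigr => i _; rewrite !mxE rmorphM.
Qed.

Lemma dot_odd l l' (t : int) : sprod l l' == 8 * t -> odd `|t|%N ->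
  odd `|Num.floor (dot (vrow l) (vrow l'))|%N.
Proof.
move=> /eqP h ho; rewrite dot_vrow h rmorphM /=.
have -> : (8%:~R : rat) * t%:~R / 8 = t%:~R by rewrite mulrAC mulfV ?mul1r.
by rewrite intrKfloor.
Qed.

Definition lg : seq nat := [:: 16; 8; 3; 2; 18; 9; 20; 17; 1; 5; 13; 14; 23; 10; 11; 19; 0; 7; 4; 15; 6; 22; 21; 12].
Definition lh : seq nat := [:: 21; 9; 7; 17; 12; 8; 11; 2; 5; 1; 19; 6; 4; 15; 20; 13; 22; 3; 23; 10; 14; 0; 16; 18].
Definition wg : seq (seq bool) := [:: [:: false; false; false; true; false; true; false; false; true; true; false; false]; [:: false; false; true; false; true; false; false; true; true; true; false; false]; [:: false; true; false; false; false; true; true; false; true; true; false; false]; [:: false; true; true; true; true; true; true; false; false; false; false; false]; [:: false; true; false; true; false; true; true; true; false; true; false; false]; [:: true; false; true; false; false; false; false; true; true; false; false; false]; [:: true; true; true; true; false; true; true; true; true; true; false; false]; [:: false; false; false; false; true; true; true; false; false; false; false; false]; [:: false; true; false; true; true; false; false; false; false; false; false; false]; [:: false; false; false; false; false; true; true; true; true; false; false; false]; [:: true; false; true; false; false; true; true; false; false; true; true; true]; [:: true; false; true; false; false; true; false; true; true; false; false; true]].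
Definition wh : seq (seq bool) := [:: [:: false; false; false; false; false; false; true; true; false; true; true; false]; [:: false; false; true; false; false; false; false; true; false; false; false; false]; [:: false; false; true; false; false; true; true; true; false; false; false; false]; [:: false; true; true; true; true; true; true; false; true; true; false; false]; [:: false; true; false; true; false; true; true; true; false; true; false; false]; [:: false; true; true; true; true; false; false; true; false; true; true; true]; [:: false; false; false; true; true; false; false; true; false; true; true; true]; [:: false; true; true; false; false; true; true; true; false; false; false; false]; [:: false; false; false; false; true; true; true; true; false; true; false; false]; [:: false; true; false; true; false; false; false; false; true; true; false; false]; [:: true; false; true; false; true; true; true; false; true; false; true; true]; [:: true; false; true; true; false; false; true; false; true; true; true; true]].
Definition lm : seq int := [:: 2; 0; 0; 0; 0; 0; 2; 0; 0; 0; 2; 2; 0; 2; 2; 2; 2; 0; 0; 2; 2; 2; 2; 0].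
Definition lk1 : seq int := [:: (-1); (-1); (-1); 1; (-1); (-1); 1; (-1); 1; 1; 1; 1; (-1); 1; 1; (-1); 3; 1; 1; 3; 1; (-1); 3; 1].
Definition lk1g : seq int := [:: 3; 1; 1; (-1); 1; 1; 1; 1; (-1); (-1); 1; 1; 1; 1; 1; 3; (-1); (-1); (-1); (-1); 1; 3; (-1); (-1)].
Definition lk2 : seq int := [:: 1; (-1); (-3); (-1); (-1); (-1); 1; 3; 1; 1; 1; 1; 1; 1; (-1); 1; 1; 1; (-1); 1; 3; 1; 1; 1].
Definition lk2h : seq int := [:: 1; 1; 3; 1; 1; 1; 1; (-3); (-1); (-1); 1; 1; (-1); 1; 3; 1; 1; (-1); 1; 1; (-1); 1; 1; (-1)].
Definition lk3 : seq int := [:: (-1); (-1); (-1); (-1); (-1); 1; 1; 1; (-1); 1; 1; (-1); (-1); 1; 1; 1; (-1); 1; 1; 1; 3; 3; 3; 1].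
Definition lk3g : seq int := [:: (-1); (-1); (-1); (-1); 1; 1; 3; 1; (-1); 1; 1; 1; 1; 1; (-1); 1; (-1); 1; (-1); 1; 1; 3; 3; (-1)].
Definition lk3gh : seq int := [:: 3; 1; 1; 1; 1; (-1); 1; (-1); 1; (-1); 1; 3; 1; 1; 1; 1; 3; (-1); (-1); 1; (-1); (-1); (-1); (-1)].
Definition c_m : seq bool := [:: true; false; false; false; false; false; true; false; false; false; true; true; false; true; true; true; true; false; false; true; true; true; true; false].
Definition y_m : seq int := [:: 0; 0; 0; 0; 0; 0; 0; 0; 0; 0; 0; 0; 0; 0; 0; 0; 0; 0; 0; 0; 0; 0; 0; 0].
Definition a_m : seq bool := [:: true; false; true; false; false; true; true; false; false; true; false; true].
Definition c_k1 : seq bool := [:: true; true; true; false; true; true; false; true; false; false; false; false; true; false; false; true; true; false; false; true; false; true; true; false].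
Definition y_k1 : seq int := [:: (-1); (-1); (-1); 0; (-1); (-1); 0; (-1); 0; 0; 0; 0; (-1); 0; 0; (-1); 0; 0; 0; 0; 0; (-1); 0; 0].
Definition a_k1 : seq bool := [:: true; true; false; true; false; false; false; true; true; false; false; true].
Definition c_k2 : seq bool := [:: false; true; false; true; true; true; false; true; false; false; false; false; false; false; true; false; false; false; true; false; true; false; false; false].
Definition y_k2 : seq int := [:: 0; (-1); (-1); (-1); (-1); (-1); 0; 0; 0; 0; 0; 0; 0; 0; (-1); 0; 0; 0; (-1); 0; 0; 0; 0; 0].
Definition a_k2 : seq bool := [:: false; true; false; false; true; false; false; false; true; true; false; false].
Definition c_k3 : seq bool := [:: true; true; true; true; true; false; false; false; true; false; false; true; true; false; false; false; true; false; false; false; true; true; true; false].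
Definition y_k3 : seq int := [:: (-1); (-1); (-1); (-1); (-1); 0; 0; 0; (-1); 0; 0; (-1); (-1); 0; 0; 0; (-1); 0; 0; 0; 0; 0; 0; 0].
Definition a_k3 : seq bool := [:: true; true; false; false; false; false; false; true; true; true; false; true].

Lemma rows_g : rows_check lg wg. Proof. by vm_compute. Qed.
Lemma rows_h : rows_check lh wh. Proof. by vm_compute. Qed.
Lemma inv_g : invol_check lg. Proof. by vm_compute. Qed.
Lemma inv_h : invol_check lh. Proof. by vm_compute. Qed.
Lemma gh_check : all (fun i => fnat lh (fnat lg (fnat lh (fnat lg i))) == i) (iota 0 24).
Proof. by vm_compute. Qed.

Definition fG := ford lg.
Definition fH := ford lh.
Definition G := Pm fG.
Definition H := Pm fH.

Lemma Co0_G : Co0 G.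
Proof. apply: Pm_Co0; [exact: invol_ford inv_g | exact: rows_check_pres rows_g]. Qed.
Lemma Co0_H : Co0 H.
Proof. apply: Pm_Co0; [exact: invol_ford inv_h | exact: rows_check_pres rows_h]. Qed.
Lemma Co0_GH : Co0 (G *m H).
Proof. exact: Co0_mul Co0_G Co0_H. Qed.
Lemma GG : G *m G = 1%:M.
Proof. exact: Pm_invol (invol_ford inv_g). Qed.
Lemma HH : H *m H = 1%:M.
Proof. exact: Pm_invol (invol_ford inv_h). Qed.
Lemma GHGH : (G *m H) *m (G *m H) = 1%:M.
Proof.
rewrite /G /H Pm_mul. apply: Pm_invol => i.
apply/val_inj; move: (all_iota_ord gh_check i) => /eqP; exact.
Qed.

Lemma leech_m : in_leech (vrow lm).
Proof. apply: (@leech_check_ok _ false c_m y_m a_m); by vm_compute. Qed.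
Lemma leech_k1 : in_leech (vrow lk1).
Proof. apply: (@leech_check_ok _ true c_k1 y_k1 a_k1); by vm_compute. Qed.
Lemma leech_k2 : in_leech (vrow lk2).
Proof. apply: (@leech_check_ok _ true c_k2 y_k2 a_k2); by vm_compute. Qed.
Lemma leech_k3 : in_leech (vrow lk3).
Proof. apply: (@leech_check_ok _ true c_k3 y_k3 a_k3); by vm_compute. Qed.

Lemma k1G : vrow lk1 *m G = vrow lk1g.
Proof. by apply: vrow_perm; vm_compute. Qed.
Lemma k2H : vrow lk2 *m H = vrow lk2h.
Proof. by apply: vrow_perm; vm_compute. Qed.
Lemma k3GH : vrow lk3 *m (G *m H) = vrow lk3gh.
Proof.
rewrite mulmxA (_ : vrow lk3 *m G = vrow lk3g); last by apply: vrow_perm; vm_compute.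
by apply: vrow_perm; vm_compute.
Qed.
Lemma mG : vrow lm *m G = vrow lm.
Proof. by apply: vrow_perm; vm_compute. Qed.

Lemma sum1 : vrow lk1 + vrow lk1 *m G = vrow lm.
Proof. by rewrite k1G; apply: vrow_add; vm_compute. Qed.
Lemma sum2 : vrow lk2 + vrow lk2 *m H = vrow lm.
Proof. by rewrite k2H; apply: vrow_add; vm_compute. Qed.
Lemma sum3 : vrow lk3 + vrow lk3 *m (G *m H) = vrow lm.
Proof. by rewrite k3GH; apply: vrow_add; vm_compute. Qed.

Lemma odd1 : odd `|Num.floor (dot (vrow lk1) (vrow lk1 *m G))|%N.
Proof. by rewrite k1G; apply: (@dot_odd _ _ (-3)); vm_compute. Qed.
Lemma odd2 : odd `|Num.floor (dot (vrow lk2) (vrow lk2 *m H))|%N.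
Proof. by rewrite k2H; apply: (@dot_odd _ _ (-3)); vm_compute. Qed.
Lemma odd3 : odd `|Num.floor (dot (vrow lk3) (vrow lk3 *m (G *m H)))|%N.
Proof. by rewrite k3GH; apply: (@dot_odd _ _ (-3)); vm_compute. Qed.

Lemma sgnC_xor (R : realType) a b : sgnC R (a (+) b) = sgnC R a * sgnC R b.
Proof. by case: a; case: b; rewrite /sgnC /= ?mulr1 ?mul1r ?mulrNN ?mulr1. Qed.

Section Zeta.
Variable R : realType.
Variable eps : vec -> vec -> bool.
Hypothesis Heps : leech_cocycle eps.
Variable zeta : 'M[rat]_24 -> vec -> R[i].
Hypothesis Hn : forall M k, Co0 M -> in_leech k -> `|zeta M k| = 1.
Hypothesis Hi : forall M k k', Co0 M -> in_leech k -> in_leech k' -> in_leech (k + k') ->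
  sgnC R (eps k k') * zeta M (k + k')
  = zeta M k * zeta M k' * sgnC R (eps (k *m M) (k' *m M)).
Hypothesis Hii : forall M1 M2 k, Co0 M1 -> Co0 M2 -> in_leech k ->
  zeta M2 (k *m M1) * zeta M1 k = zeta (M1 *m M2) k.

Lemma zeta1 k : in_leech k -> zeta 1%:M k = 1.
Proof.
move=> hk; have := Hii _ _ _ Co0_1 Co0_1 hk; rewrite !mulmx1 => e.
have nz : zeta 1%:M k != 0 by rewrite -normr_eq0 (Hn _ _ Co0_1 hk) oner_eq0.
by apply: (mulIf nz); rewrite mul1r.
Qed.

Lemma inv_lemma M k : Co0 M -> M *m M = 1%:M -> in_leech k -> in_leech (k + k *m M) ->
  odd `|Num.floor (dot k (k *m M))|%N -> zeta M (k + k *m M) = -1.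
Proof.
move=> hM hMM hk hs ho.
have hkM : in_leech (k *m M) by apply: hM.2.
have e1 := Hi _ _ _ hM hk hkM hs.
rewrite -mulmxA hMM mulmx1 in e1.
have e2 := Hii _ _ _ hM hM hk; rewrite hMM zeta1 // in e2.
rewrite [zeta M k * _]mulrC e2 mul1r in e1.
have ec := (Heps.2.2 _ _ hk hkM); rewrite ho in ec.
move: ec e1; case: (eps k (k *m M)); case: (eps (k *m M) k) => //= _; rewrite /sgnC.
  by rewrite mulN1r => /eqP; rewrite eqr_oppLR => /eqP.
by rewrite mul1r.
Qed.

Lemma no_zeta_core : False.
Proof.
have zG : zeta G (vrow lm) = -1.
  rewrite -sum1; apply: inv_lemma; rewrite ?sum1.
  - exact: Co0_G.
  - exact: GG.
  - exact: leech_k1.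
  - exact: leech_m.
  - exact: odd1.
have zH : zeta H (vrow lm) = -1.
  rewrite -sum2; apply: inv_lemma; rewrite ?sum2.
  - exact: Co0_H.
  - exact: HH.
  - exact: leech_k2.
  - exact: leech_m.
  - exact: odd2.
have zGH : zeta (G *m H) (vrow lm) = -1.
  rewrite -sum3; apply: inv_lemma; rewrite ?sum3.
  - exact: Co0_GH.
  - exact: GHGH.
  - exact: leech_k3.
  - exact: leech_m.
  - exact: odd3.
have := Hii _ _ _ Co0_G Co0_H leech_m.
rewrite mG zH zG zGH mulrNN mulr1 => /eqP.
by rewrite -addr_eq0 (_ : 1 + 1 = 2%:R) // pnatr_eq0.
Qed.

End Zeta.

Theorem mainTheorem2 (R : realType) (eps : vec -> vec -> bool) :
  leech_cocycle eps ->
  (~ exists zeta : 'M[rat]_24 -> vec -> R[i],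
       (forall M k, Co0 M -> in_leech k -> `|zeta M k| = 1) /\
       (forall M k k', Co0 M -> in_leech k -> in_leech k' ->
          sgnC R (eps k k') * zeta M (k + k')
          = zeta M k * zeta M k' * sgnC R (eps (k *m M) (k' *m M))) /\
       (forall M1 M2 k, Co0 M1 -> Co0 M2 -> in_leech k ->
          zeta M2 (k *m M1) * zeta M1 k = zeta (M1 *m M2) k))
  /\
  (~ exists s : 'M[rat]_24 -> bool * vec -> bool * vec,
       (forall M, Co0 M ->
          in_OhatL eps (s M) /\
          forall k, in_leech k -> (s M (false, k)).2 = k *m M) /\
       (forall M1 M2 x, Co0 M1 -> Co0 M2 -> in_hatL x ->
          s (M1 *m M2) x = s M2 (s M1 x))).
Proof.
move=> Heps; split.
  move=> [zeta [Hn [Hi Hii]]].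
  apply: (@no_zeta_core R eps Heps zeta Hn _ Hii) => M k k' hM hk hk' _; exact: Hi.
move=> [s [Hs Hc]].
have form : forall M a v, Co0 M -> in_leech v ->
    s M (a, v) = (a (+) (s M (false, v)).1, v *m M).
  move=> M a v hM hv.
  have [[hL [hm [_ [_ [h0 _]]]]] hrow] := Hs M hM.
  have e2 : (s M (false, v)).2 = v *m M := hrow v hv.
  case: a.
    rewrite [(true, v)](_ : _ = hmul eps (true, 0) (false, v)); last first.
      by rewrite /hmul /= ((Heps.1 _ hv).1) add0r.
    rewrite hm ?h0 /in_hatL //=; last exact: leech0.
    rewrite /hmul /= e2 add0r ((Heps.1 _ (hM.2 _ hv)).1).
    by case: (s M (false, v)).1.
  by rewrite -e2; case: (s M (false, v)).
pose zeta M k := sgnC R (s M (false, k)).1.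
apply: (@no_zeta_core R eps Heps zeta).
- move=> M k _ _; rewrite /zeta /sgnC; case: (_.1); by rewrite ?normrN1 ?normr1.
- move=> M k k' hM hk hk' hkk'.
  have [[_ [hm _]] hrow] := Hs M hM.
  have := congr1 fst (hm (false, k) (false, k') hk hk').
  rewrite /hmul /= (form M (eps k k') (k + k') hM hkk') (hrow k hk) (hrow k' hk') /= => E.
  by rewrite /zeta -!sgnC_xor E.
- move=> M1 M2 k h1 h2 hk.
  rewrite /zeta (Hc M1 M2 (false, k) h1 h2 hk).
  rewrite [s M1 (false, k)](form M1 false k h1 hk) /=.
  rewrite (form M2 (s M1 (false, k)).1 (k *m M1) h2 (h1.2 _ hk)) /=.
  by rewrite sgnC_xor mulrC.
Qed.
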